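(* Consider the plant $\dot x=Ax+B_1w+Bu$ with $A\mathbb{1}=0$ and $B$ of full column rank, in feedback with a state-feedback controller $u=Kx$ ($K$ a rational transfer matrix with $sI-A-BK(s)$ invertible), and let $\Phi_u(s)=K(s)(sI-A-BK(s))^{-1}$. Then $K(s)\mathbb{1}=0$ if and only if $\Phi_u(s)\mathbb{1}=0$. In particular, for the plant $\dot x=u+w$, a state-feedback controller $K$ satisfies $K\mathbb{1}=0$ iff the corresponding $\Phi_u$ satisfies $\Phi_u\mathbb{1}=0$.
   Context: $\mathbb{1}$ denotes the all-ones vector; a matrix (or transfer matrix) $M$ with $M\mathbb{1}=0$ is called relative. *)

(* Defs.v *)
From HB Require Import structures.
From mathcomp Require Import all_boot all_order all_algebra.
From mathcomp Require Import fraction.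
Set Implicit Arguments. Unset Strict Implicit. Unset Printing Implicit Defensive.
Import GRing.Theory.
Local Open Scope ring_scope.

Notation ratfun R := {fraction {poly R}}.

Definition cmx (R : fieldType) (m n : nat) (M : 'M[R]_(m, n)) : 'M[ratfun R]_(m, n) :=
  map_mx (fun a : R => FracField.tofrac (a%:P)) M.

Definition svar (R : fieldType) : ratfun R := FracField.tofrac 'X.

Definition ones (T : nzRingType) (n : nat) : 'cV[T]_n := const_mx 1.

Definition closed_loop (R : fieldType) (n m : nat) (A : 'M[R]_n) (B : 'M[R]_(n, m))
  (K : 'M[ratfun R]_(m, n)) : 'M[ratfun R]_n :=
  (svar R)%:M - cmx A - cmx B *m K.

Definition Phi_u (R : fieldType) (n m : nat) (A : 'M[R]_n) (B : 'M[R]_(n, m))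
  (K : 'M[ratfun R]_(m, n)) : 'M[ratfun R]_(m, n) :=
  K *m invmx (closed_loop A B K).

(* Main.v *)
Require Import Defs.
From HB Require Import structures.
From mathcomp Require Import all_boot all_order all_algebra.
From mathcomp Require Import fraction.
Import GRing.Theory.
Local Open Scope ring_scope.

Lemma cmxE (R : fieldType) m n (M : 'M[R]_(m,n)) :
  cmx M = map_mx ((@FracField.tofrac _) \o polyC) M.
Proof. by []. Qed.

Lemma ones_cmx (R : fieldType) n : ones _ n = cmx (ones R n).
Proof. by apply/matrixP=> i j; rewrite !mxE rmorph1. Qed.

Lemma sA_unit (R : fieldType) n (A : 'M[R]_n) :
  (svar R)%:M - cmx A \in unitmx.
Proof.
rewrite unitmxE unitfE.
have -> : (svar R)%:M - cmx A = map_mx (@FracField.tofrac _) (char_poly_mx A).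
  rewrite /char_poly_mx map_mxB map_scalar_mx cmxE map_mx_comp //.
rewrite det_map_mx -/(char_poly A) tofrac_eq.
have := monic_neq0 (char_poly_monic A). by [].
Qed.

Theorem lemma4 (R : fieldType) (n m p : nat) (A : 'M[R]_n) (B1 : 'M[R]_(n, p))
  (B : 'M[R]_(n, m)) (K : 'M[{fraction {poly R}}]_(m, n)) :
  A *m ones R n = 0 ->
  \rank B = m ->
  closed_loop A B K \in unitmx ->
  (K *m ones _ n = 0 <-> Phi_u A B K *m ones _ n = 0).
Proof.
move=> hA _ hM.
have hA' : cmx A *m ones _ n = 0.
  by rewrite ones_cmx !cmxE -map_mxM -cmxE hA; apply/matrixP=> i j; rewrite !mxE rmorph0.
have s0 : svar R != 0.
  by rewrite /svar tofrac_eq polyX_eq0.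
set N := (svar R)%:M - cmx A.
have hN1 : N *m ((svar R)^-1 *: ones _ n) = ones _ n.
  by rewrite /N mulmxBl mul_scalar_mx -scalemxAr hA' scaler0 subr0 scalerA mulfV // scale1r.
have hM1 : forall v : 'cV_n, K *m v = 0 -> closed_loop A B K *m v = N *m v.
  by move=> v hv; rewrite /closed_loop mulmxBl -mulmxA hv mulmx0 subr0.
split=> h.
- have h1 : K *m ((svar R)^-1 *: ones _ n) = 0.
    by rewrite -scalemxAr h scaler0.
  have h2 := hM1 _ h1.
  rewrite hN1 in h2.
  have e : invmx (closed_loop A B K) *m ones _ n = (svar R)^-1 *: ones _ n.
    by rewrite -[in LHS]h2 (mulKmx hM).
  by rewrite /Phi_u -mulmxA e -scalemxAr h scaler0.
- have hv : K *m (invmx (closed_loop A B K) *m ones _ n) = 0.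
    by rewrite mulmxA.
  have e := hM1 _ hv.
  rewrite (mulKVmx hM) in e.
  have uN : N \in unitmx by apply: sA_unit.
  have ev : invmx (closed_loop A B K) *m ones _ n = (svar R)^-1 *: ones _ n.
    by rewrite -(mulKmx uN (invmx _ *m _)) -e -[in LHS]hN1 (mulKmx uN).
  have : (svar R)^-1 *: (K *m ones _ n) = 0.
    by rewrite scalemxAr -ev.
  move/eqP; rewrite scaler_eq0 invr_eq0 (negbTE s0) /=. by move/eqP.
Qed.
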